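(* Let $\tilde B^{(r,s)}_{n,k}=[x^ny^k]\frac{1}{x}\mathrm{Rev}\left(\frac{x(1-yx)}{1+rx+sx^2}\right)$ and $\tilde B^{(r,s)}_n(y)=\sum_{k=0}^n\tilde B^{(r,s)}_{n,k}y^k$. Then: (i) the polynomials $\tilde B^{(r,s)}_n(y)$ are the moments of the orthogonal polynomials with coefficient array the Riordan array $$\left(\frac{1+xy}{1+(r+2y)x+(s+ry+y^2)x^2},\ \frac{x}{1+(r+2y)x+(s+ry+y^2)x^2}\right),$$ i.e. the first column of the inverse of this array has generating function $\sum_n\tilde B^{(r,s)}_n(y)x^n$; (ii) $$\sum_{n\ge0}\tilde B^{(r,s)}_n(y)x^n=\cfrac{1}{1-(r+y)x-\cfrac{(s+ry+y^2)x^2}{1-(r+2y)x-\cfrac{(s+ry+y^2)x^2}{1-(r+2y)x-\cdots}}}.$$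
   Context: A Riordan array $(g(x),f(x))$ is the lower-triangular matrix with $(n,k)$ entry $[x^n]g(x)f(x)^k$; moments are the entries of the first column of its inverse. Continued fractions are formal power series limits of convergents. $\mathrm{Rev}$ is compositional inverse in $x$. *)

(* Defs.v *)
(* Formal power series in x are modelled as coefficient
   functions  nat -> A  over a commutative ring A; the paper's variable y is
   the polynomial variable 'X of A := {poly R}. *)
From HB Require Import structures.
From mathcomp Require Import all_boot all_order all_algebra.
Set Implicit Arguments. Unset Strict Implicit. Unset Printing Implicit Defensive.
Import Order.TTheory GRing.Theory Num.Theory.
Local Open Scope ring_scope.

Section FPS.
Variable A : comNzRingType.

Definition fps := nat -> A.

Definition fadd (f g : fps) : fps := fun n => f n + g n.
Definition fsub (f g : fps) : fps := fun n => f n - g n.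
Definition fmul (f g : fps) : fps := fun n => \sum_(i < n.+1) f i * g (n - i)%N.
Definition fone : fps := fun n => (n == 0)%:R.
Definition fX : fps := fun n => (n == 1)%:R.
Definition fpoly (p : seq A) : fps := fun n => nth 0 p n.
Definition fpow (f : fps) (k : nat) : fps := iter k (fmul f) fone.

(* composition f(g(x)), meaningful when g 0 = 0 *)
Definition fcomp (f g : fps) : fps :=
  fun n => \sum_(k < n.+1) f k * fpow g k n.

(* multiplicative inverse 1/q of a series with q 0 = 1:
   1/q = sum_k (1 - q)^k, and (1-q)^k = O(x^k). *)
Definition finv1 (q : fps) : fps :=
  fun n => \sum_(k < n.+1) fpow (fsub fone q) k n.

(* compositional inverse Rev f of a series f = x + O(x^2) (f 0 = 0, f 1 = 1):
   the unique g with g 0 = 0 and f(g(x)) = x, i.e. g = x - (f - x)(g(x)).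
   The n-th coefficient is stable after n+1 fixed-point iterations. *)
Definition frev (f : fps) : fps :=
  fun n => iter n.+1 (fun g => fsub fX (fcomp (fsub f fX) g)) (fun _ => 0) n.

Definition riordan (G F : fps) (n k : nat) : A := fmul G (fpow F k) n.

Definition first_col_of_inverse (L : nat -> nat -> A) (c : nat -> A) : Prop :=
  forall n, \sum_(k < n.+1) L n k * c k = (n == 0)%:R.

(* Convergents of the J-fraction
   1/(1 - a_j x - b_{j+1} x^2/(1 - a_{j+1} x - b_{j+2} x^2/( ... /(1 - a_{j+d} x))))
   of depth d starting at level j. *)
Fixpoint jconv (a b : nat -> A) (d j : nat) : fps :=
  match d with
  | 0 => finv1 (fpoly [:: 1; - a j])
  | d'.+1 => finv1 (fsub (fpoly [:: 1; - a j])
                         (fmul (fpoly [:: 0; 0; b j.+1]) (jconv a b d' j.+1)))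
  end.

Definition fps_limit (C : nat -> fps) (S : fps) : Prop :=
  forall n, exists M, forall m, (M <= m)%N -> C m n = S n.

End FPS.

Section Bt.
Variables (R : comNzRingType) (r s : R).

Definition useries : fps {poly R} :=
  fmul (fpoly [:: 0; 1; - 'X]) (finv1 (fpoly [:: 1; r%:P; s%:P])).

Definition Btnk (n k : nat) : R := (frev useries n.+1)`_k.

Definition Bt (n : nat) : {poly R} := \sum_(k < n.+1) Btnk n k *: 'X^k.

Definition Dser : fps {poly R} :=
  fpoly [:: 1; r%:P + 2%:R * 'X; s%:P + r%:P * 'X + 'X^2].
Definition Gser : fps {poly R} := fmul (fpoly [:: 1; 'X]) (finv1 Dser).
Definition Fser : fps {poly R} := fmul (fpoly [:: 0; 1]) (finv1 Dser).

Definition alphaB (j : nat) : {poly R} :=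
  if j == 0%N then r%:P + 'X else r%:P + 2%:R * 'X.
Definition betaB (j : nat) : {poly R} := s%:P + r%:P * 'X + 'X^2.

End Bt.

(* Main.v *)
Require Import Defs.
From HB Require Import structures.
From mathcomp Require Import all_boot all_order all_algebra.
From mathcomp Require Import ring zify.
From Stdlib Require Import Setoid Morphisms.
Set Implicit Arguments. Unset Strict Implicit. Unset Printing Implicit Defensive.
Import GRing.Theory.
Local Open Scope ring_scope.



Section Cong.
Variable A : comNzRingType.
Implicit Types p q P a b C : {poly A}.

Definition cong (N : nat) (p q : {poly A}) := exists k, p - q = 'X^N * k.
Lemma cong_refl N : Reflexive (cong N). Proof. by move=> p; exists 0; rewrite subrr mulr0. Qed.
Lemma cong_sym N : Symmetric (cong N). Proof. by move=> p q [k e]; exists (-k); rewrite -opprB e mulrN. Qed.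
Lemma cong_trans N : Transitive (cong N). Proof. move=> p q w [k e] [l f]; exists (k + l). by rewrite mulrDr -e -f addrA subrK. Qed.
Global Instance cong_Equiv N : Equivalence (cong N).
Proof. split; [exact: cong_refl|exact: cong_sym|exact: cong_trans]. Qed.
Global Instance cong_add N : Proper (cong N ==> cong N ==> cong N) (@GRing.add {poly A}).
Proof. move=> p p' [k e] q q' [l f]; exists (k + l); rewrite mulrDr -e -f; by rewrite opprD addrACA. Qed.
Global Instance cong_mul N : Proper (cong N ==> cong N ==> cong N) (@GRing.mul {poly A}).
Proof. move=> p p' [k e] q q' [l f]; exists (k * q + p' * l).
rewrite mulrDr mulrA -e mulrCA -f. by rewrite mulrBl mulrBr addrA subrK. Qed.
Global Instance cong_opp N : Proper (cong N ==> cong N) (@GRing.opp {poly A}).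
Proof. move=> p p' [k e]; exists (-k). by rewrite -opprD e mulrN. Qed.
Global Instance cong_exp N : Proper (cong N ==> eq ==> cong N) (@GRing.exp {poly A}).
Proof. move=> p p' e n m <- {m}; elim: n => [|n IH]; first by rewrite !expr0; apply: cong_refl.
by rewrite !exprS; apply: cong_mul. Qed.

Lemma cong_eq N p q : p = q -> cong N p q. Proof. by move=> ->; apply: cong_refl. Qed.

Lemma cong_coef N p q : cong N p q -> forall n, (n < N)%N -> p`_n = q`_n.
Proof. move=> [k e] n lt; apply/eqP; rewrite -subr_eq0 -coefB e coefXnM lt //. Qed.

Lemma coef_cong N p q : (forall n, (n < N)%N -> p`_n = q`_n) -> cong N p q.
Proof.
move=> H; set d := p - q.
exists (\poly_(i < size d) d`_(i + N)); apply/polyP => i.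
rewrite coefXnM; case: ltnP => iN.
  by rewrite /d coefB H // subrr.
rewrite coef_poly; case: ltnP => si; first by rewrite subnK.
by move/leq_sizeP: (leq_trans si (leq_subr N i)) => /(_ i (leqnn i)).
Qed.

Lemma cong_le M N p q : (M <= N)%N -> cong N p q -> cong M p q.
Proof. move=> le [k e]; exists ('X^(N - M) * k); by rewrite mulrA -exprD subnKC. Qed.

Lemma cong0 N : cong 0 N 0 -> True. Proof. by []. Qed.
Lemma cong_0 p q : cong 0 p q. Proof. by exists (p - q); rewrite expr0 mul1r. Qed.

Lemma cong_X0 p : p`_0 = 0 -> exists p', p = 'X * p'.
Proof. move=> H; have [k e] : cong 1 p 0 by apply: coef_cong => -[|] //; rewrite coef0.
by exists k; move: e; rewrite subr0 expr1. Qed.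

Lemma cong_shift N p q : cong N.+1 ('X * p) ('X * q) -> cong N p q.
Proof. move=> H; apply: coef_cong => n lt. have := cong_coef H (n := n.+1) lt.
by rewrite !coefXM. Qed.

Lemma cong_mulX N p q : cong N p q -> cong N.+1 ('X * p) ('X * q).
Proof. move=> [k e]; exists k; by rewrite -mulrBr e mulrA -exprS. Qed.

Lemma cong_Xpow N p : cong N ('X^N * p) 0.
Proof. by exists p; rewrite subr0. Qed.

Lemma comp_Xn n p : 'X^n \Po p = p ^+ n.
Proof. elim: n => [|n IH]; first by rewrite !expr0 comp_polyC.
by rewrite !exprS comp_polyM comp_polyX IH. Qed.

Lemma comp_diff P a b : exists W, (P \Po a) - (P \Po b) = (a - b) * W.
Proof.
elim/poly_ind: P => [|P c [W e]].
  by exists 0; rewrite !comp_poly0 subrr mulr0.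
exists (W * a + (P \Po b)).
rewrite !comp_polyD !comp_polyM !comp_polyX !comp_polyC.
have -> : (P \Po a) = (P \Po b) + (a - b) * W :> {poly A} by rewrite -e addrC subrK.
ring.
Qed.

Lemma cong_comp_r N P a b : cong N a b -> cong N (P \Po a) (P \Po b).
Proof. move=> [k e]; have [W eW] := comp_diff P a b; exists (k * W). by rewrite eW e mulrA. Qed.

Global Instance cong_compP N : Proper (cong N ==> eq ==> cong N) (@comp_poly A).
Proof. by move=> a b e p _ <-; apply: cong_comp_r. Qed.

Lemma cong_comp_l N p q a : a`_0 = 0 -> cong N p q -> cong N (p \Po a) (q \Po a).
Proof.
move=> a0 [k e]; have [a' ea] := cong_X0 a0.
exists (a' ^+ N * (k \Po a)).
by rewrite -comp_polyB e comp_polyM comp_Xn ea exprMn mulrA.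
Qed.

Lemma comp_coef0 p a : a`_0 = 0 -> (p \Po a)`_0 = p`_0.
Proof.
move=> a0; elim/poly_ind: p => [|p c IH]; first by rewrite comp_poly0 coef0.
rewrite comp_polyD comp_polyM comp_polyX comp_polyC !coefD !coefC /=.
by rewrite !coefM !big_ord1 a0 coefX /= !mulr0.
Qed.

Lemma contraction N m C (C' : {poly A}) a b :
  cong N C ('X^2 * C') -> cong m a b -> a`_0 = 0 -> b`_0 = 0 ->
  forall M, (M <= N)%N -> (M <= m.+1)%N -> cong M (C \Po a) (C \Po b).
Proof.
move=> eC eab a0 b0 M MN Mm.
have eC' : cong M C ('X^2 * C') by apply: cong_le eC.
rewrite (cong_comp_l a0 eC') (cong_comp_l b0 eC').
apply: cong_le Mm _.
have [a' ea] := cong_X0 a0; have [b' eb] := cong_X0 b0.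
have [W eW] := comp_diff C' a b.
move: eab => [k ek].
exists (k * ('X * a' ^+ 2 * W + (a' + b') * (C' \Po b))).
rewrite !comp_polyM !comp_polyX.
have -> : (C' \Po a) = (C' \Po b) + (a - b) * W by rewrite -eW addrC subrK.
have -> : a * a * ((C' \Po b) + (a - b) * W) - b * b * (C' \Po b)
   = (a - b) * ((a + b) * (C' \Po b) + a * a * W) by ring.
rewrite ek ea eb exprS. ring.
Qed.

Lemma fixpt_unique N C (C' : {poly A}) P a b :
  cong N C ('X^2 * C') -> a`_0 = 0 -> b`_0 = 0 ->
  cong N a (P - (C \Po a)) -> cong N b (P - (C \Po b)) -> cong N a b.
Proof.
move=> eC a0 b0 ea eb.
suff H : forall m, (m <= N)%N -> cong m a b by apply: H.
elim=> [|m IH] lt; first exact: cong_0.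
have h := IH (ltnW lt).
have hc := contraction eC h a0 b0 lt (leqnn _).
rewrite (cong_le lt ea) (cong_le lt eb) hc. reflexivity.
Qed.

Lemma inv_unique N m P Q P' Q' :
  cong N (P * Q) 1 -> cong N (P' * Q') 1 -> cong m Q Q' ->
  forall M, (M <= N)%N -> (M <= m)%N -> cong M P P'.
Proof.
move=> e e' eQ M MN Mm.
have e1 : cong M P (P * (P' * Q')) by rewrite (cong_le MN e') mulr1; reflexivity.
have e2 : cong M P' (P' * (P * Q)) by rewrite (cong_le MN e) mulr1; reflexivity.
transitivity (P * (P' * Q')); first exact: e1.
transitivity (P' * (P * Q)); last by symmetry.
rewrite (cong_le Mm eQ); apply: cong_eq; ring.
Qed.

Lemma geom_inv N p : cong N ((1 - 'X * p) * \sum_(k < N) ('X * p) ^+ k) 1.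
Proof.
have := subrX1 ('X * p) N.
move=> e; exists (- p ^+ N).
have -> : (1 - 'X * p) * \sum_(k < N) ('X * p) ^+ k = - (('X * p - 1) * \sum_(k < N) ('X * p) ^+ k) by ring.
rewrite -e exprMn. ring.
Qed.

End Cong.



Section Transfer.
Variable A : comNzRingType.
Implicit Types f g h q : fps A.

Definition tr N f : {poly A} := \poly_(i < N) f i.

Lemma trE N f : tr N f = \sum_(i < N) f i *: 'X^i.
Proof. exact: poly_def. Qed.

Lemma coef_tr N f n : (n < N)%N -> (tr N f)`_n = f n.
Proof. by move=> lt; rewrite coef_poly lt. Qed.

Lemma coefM_local (p q p' q' : {poly A}) n :
  (forall m, (m <= n)%N -> p`_m = p'`_m /\ q`_m = q'`_m) ->
  (p * q)`_n = (p' * q')`_n.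
Proof.
move=> H; rewrite !coefM; apply: eq_bigr => -[j /= lj] _.
have [-> _] := H j lj; have [_ ->] := H (n - j)%N (leq_subr _ _); by [].
Qed.

Lemma tr_mul N f g : cong N (tr N (fmul f g)) (tr N f * tr N g).
Proof.
apply: coef_cong => n lt; rewrite coef_tr // coefM /fmul.
apply: eq_bigr => -[j /= lj] _; rewrite !coef_tr //.
  by apply: leq_ltn_trans (leq_subr _ _) lt.
by apply: leq_ltn_trans lt; rewrite -ltnS.
Qed.

Lemma tr_add N f g : tr N (fadd f g) = tr N f + tr N g.
Proof. by apply/polyP => i; rewrite coefD !coef_poly; case: ifP; rewrite ?addr0. Qed.

Lemma tr_sub N f g : tr N (fsub f g) = tr N f - tr N g.
Proof. by apply/polyP => i; rewrite coefB !coef_poly; case: ifP; rewrite ?subr0. Qed.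

Lemma tr_one N : cong N (tr N (fone A)) 1.
Proof. apply: coef_cong => n lt; by rewrite coef_tr // coef1 /fone. Qed.

Lemma tr_X N : cong N (tr N (fX A)) 'X.
Proof. apply: coef_cong => n lt; by rewrite coef_tr // coefX /fX. Qed.

Lemma tr_poly N s : cong N (tr N (fpoly s)) (Poly s).
Proof. apply: coef_cong => n lt; by rewrite coef_tr // coef_Poly /fpoly. Qed.

Lemma tr_pow N g k : cong N (tr N (fpow g k)) (tr N g ^+ k).
Proof.
elim: k => [|k IH]; first by rewrite expr0 tr_one; reflexivity.
rewrite exprS /fpow iterS -/(fpow g k) tr_mul. by rewrite IH; reflexivity.
Qed.

Lemma tr0 N g : g 0%N = 0 -> (tr N g)`_0 = 0.
Proof. by move=> g0; rewrite coef_poly; case: ifP. Qed.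

Lemma fpow_vanish g k n : g 0%N = 0 -> (n < k)%N -> fpow g k n = 0.
Proof.
move=> g0 lt.
have := cong_coef (tr_pow (n.+1) g k) (ltnSn n); rewrite coef_tr // => ->.
have [g' ->] := cong_X0 (tr0 (n.+1) g0).
by rewrite exprMn coefXnM lt.
Qed.

Lemma tr_comp N f g : g 0%N = 0 -> cong N (tr N (fcomp f g)) (tr N f \Po tr N g).
Proof.
move=> g0; apply: coef_cong => n lt.
rewrite coef_tr // (trE N f).
have -> : forall m (G : nat -> A) (q : {poly A}),
   (\sum_(i < m) G i *: 'X^i) \Po q = \sum_(i < m) G i *: q ^+ i.
  move=> m G q; elim: m => [|m IH]; first by rewrite !big_ord0 comp_poly0.
  by rewrite !big_ord_recr /= comp_polyD comp_polyZ comp_Xn IH.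
rewrite coef_sum /fcomp.
rewrite (big_ord_widen N (fun i => f i * fpow g i n)) //.
rewrite big_mkcond /=; apply: eq_bigr => -[i /= li] _.
rewrite coefZ -(cong_coef (tr_pow N g i) lt) coef_tr //.
by case: ltnP => // ni; rewrite fpow_vanish // mulr0.
Qed.

Lemma tr_inv N q : q 0%N = 1 -> cong N (tr N q * tr N (finv1 q)) 1.
Proof.
move=> q1; set h := fsub (fone A) q.
have h0 : h 0%N = 0 by rewrite /h /fsub /fone q1 subrr.
have e1 : cong N (tr N (finv1 q)) (\sum_(k < N) (tr N h) ^+ k).
  apply: coef_cong => n lt; rewrite coef_tr // coef_sum /finv1.
  rewrite (big_ord_widen N (fun k => fpow h k n)) //.
  rewrite big_mkcond /=; apply: eq_bigr => -[i /= li] _.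
  rewrite -(cong_coef (tr_pow N h i) lt) coef_tr //.
  by case: ltnP => // ni; rewrite fpow_vanish.
have e2 : cong N (tr N q) (1 - tr N h) by rewrite /h tr_sub tr_one; apply: cong_eq; ring.
have [h' eh] := cong_X0 (tr0 N h0).
rewrite e1 e2 eh; exact: geom_inv.
Qed.

End Transfer.



Section MapC.
Variable R : comNzRingType.

Lemma fpow_mapC (h : fps R) (h' : fps {poly R}) :
  (forall m, h' m = (h m)%:P) -> forall k n, fpow h' k n = (fpow h k n)%:P.
Proof.
move=> eh; elim=> [|k IH] n; first by rewrite /fpow /= /fone rmorph_nat.
rewrite /fpow !iterS -!/(fpow _ k) /fmul rmorph_sum; apply: eq_bigr => i _.
by rewrite eh IH rmorphM.
Qed.

Lemma finv1_mapC (q : fps R) (q' : fps {poly R}) :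
  (forall m, q' m = (q m)%:P) -> forall n, finv1 q' n = (finv1 q n)%:P.
Proof.
move=> eq n; rewrite /finv1 rmorph_sum; apply: eq_bigr => k _.
apply: fpow_mapC => m; by rewrite /fsub /fone eq rmorphB rmorph_nat.
Qed.
End MapC.

Section Useries.
Variables (R : comNzRingType) (r s : R).

Definition QfR : fps R := fpoly [:: 1; r; s].
Definition Qf : fps {poly R} := fpoly [:: 1; r%:P; s%:P].

Lemma Qf_C m : Qf m = (QfR m)%:P.
Proof. by rewrite /Qf /QfR /fpoly; case: m => [|[|[|m]]] //=; rewrite ?nth_nil. Qed.

Lemma finv1_0 (A : comNzRingType) (q : fps A) : finv1 q 0%N = 1.
Proof. by rewrite /finv1 big_ord1 /fpow /= /fone. Qed.

Lemma u0 : useries r s 0%N = 0.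
Proof. by rewrite /useries /fmul big_ord1 /fpoly /= mul0r. Qed.

Lemma u1 : useries r s 1%N = 1.
Proof. by rewrite /useries /fmul !big_ord_recr big_ord0 /fpoly /= subnn finv1_0 mul0r !add0r mul1r. Qed.

Lemma u_coef k b : (2 <= b)%N -> (useries r s k)`_b = 0.
Proof.
move=> b2; rewrite /useries /fmul coef_sum big1 // => -[a /= _] _.
rewrite (finv1_mapC Qf_C) coefMC /fpoly.
case: a => [|[|[|a]]] /=; rewrite ?nth_nil ?coef0 ?mul0r //.
  by rewrite coef1; case: b b2 => [|[|b]] //= _; rewrite mul0r.
by rewrite coefN coefX; case: b b2 => [|[|b]] //; rewrite oppr0 mul0r.
Qed.

Definition cc : fps {poly R} := fsub (useries r s) (fX _).

Lemma cc_coef k b : ((k <= 1) || (2 <= b))%N -> (cc k)`_b = 0.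
Proof.
rewrite /cc /fsub /fX coefB; case/orP.
  case: k => [|[|k]] // _; first by rewrite u0 /= mulr0n coef0 subrr.
  by rewrite u1 /= mulr1n subrr.
move=> b2; rewrite u_coef //; case: (k == 1%N); rewrite ?mulr1n ?mulr0n ?coef1 ?coef0.
  by case: b b2 => [|[|b]] //= _; rewrite subrr.
by rewrite subrr.
Qed.

Definition Phi (h : fps {poly R}) : fps {poly R} := fsub (fX _) (fcomp cc h).
Definition It j := iter j Phi (fun _ => 0).

Lemma It0 j : It j 0%N = 0.
Proof.
case: j => [|j] //; rewrite /It iterS /Phi /fsub /fX /fcomp big_ord1.
by rewrite /cc /fsub u0 /fX subrr mul0r subrr.
Qed.

Lemma frevE n : frev (useries r s) n = It n.+1 n.
Proof. by []. Qed.

Definition W0 (h : fps {poly R}) := forall n j, (n <= j)%N -> (h n)`_j = 0.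

Lemma Wpow h : W0 h -> forall i n j, (n < j + i)%N -> (fpow h i n)`_j = 0.
Proof.
move=> Wh; elim=> [|i IH] n j lt.
  rewrite /fpow /= /fone; case: n lt => [|n] lt /=; last by rewrite coef0.
  by rewrite coef1; case: j lt.
rewrite /fpow iterS -/(fpow h i) /fmul coef_sum big1 // => -[a /= la] _.
rewrite coefM big1 // => -[b /= lb] _.
case: (leqP a b) => ab; first by rewrite Wh // mul0r.
by rewrite IH ?mulr0 //; lia.
Qed.

Lemma Wstep h : W0 h -> W0 (Phi h).
Proof.
move=> Wh n j nj; rewrite /Phi /fsub coefB /fcomp coef_sum big1 ?subr0.
  rewrite /fX; case: (n == 1%N) /eqP => [e|_]; last by rewrite coef0.
  by rewrite coef1; case: j nj; rewrite e.
move=> -[k /= lk] _; rewrite coefM big1 // => -[b /= lb] _.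
case: (boolP ((k <= 1) || (2 <= b))%N) => H; first by rewrite cc_coef // mul0r.
by rewrite Wpow ?mulr0 //; move: H; rewrite negb_or -!ltnNge; lia.
Qed.

Lemma W_It j : W0 (It j).
Proof.
elim: j => [|j IH]; first by move=> n i _; rewrite coef0.
by rewrite /It iterS; apply: Wstep.
Qed.

Lemma size_frev k : (size (frev (useries r s) k.+1) <= k.+1)%N.
Proof. by apply/leq_sizeP => j lt; rewrite frevE W_It. Qed.

Lemma BtE k : Bt r s k = frev (useries r s) k.+1.
Proof.
rewrite /Bt -poly_def; apply/polyP => j; rewrite coef_poly /Btnk.
case: ltnP => // jk.
by apply/esym; move/leq_sizeP: (size_frev k); apply.
Qed.

End Useries.



Lemma Poly3 (A : comNzRingType) (a b c : A) : Poly [:: a; b; c] = a%:P + b%:P * 'X + c%:P * 'X^2.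
Proof. rewrite /= !cons_poly_def mul0r add0r. ring. Qed.
Lemma Poly2 (A : comNzRingType) (a b : A) : Poly [:: a; b] = a%:P + b%:P * 'X.
Proof. rewrite /= !cons_poly_def mul0r add0r. ring. Qed.

Section Stab.
Variables (R : comNzRingType) (r s : R) (N : nat).
Local Notation cc := (cc r s).
Local Notation It := (It r s).

Definition Cp := tr N cc.
Definition TP j := tr N (It j).
Definition gP := tr N (frev (useries r s)).

Lemma cc01 : cc 0%N = 0 /\ cc 1%N = 0.
Proof. by split; apply/polyP => b; rewrite coef0 cc_coef. Qed.

Lemma Cp_form : exists C', Cp = 'X^2 * C'.
Proof.
have [k e] : cong 2 Cp 0.
  apply: coef_cong => -[|[|n]] // _; rewrite coef0 /Cp coef_poly;
  by case: ifP; rewrite // (proj1 cc01, proj2 cc01).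
by exists k; rewrite -e subr0.
Qed.

Lemma TP0 j : (TP j)`_0 = 0.
Proof. exact/tr0/It0. Qed.

Lemma TP_step j : cong N (TP j.+1) ('X - (Cp \Po TP j)).
Proof.
rewrite /TP /It iterS -/(It j) /Phi tr_sub tr_X tr_comp ?It0 //; reflexivity.
Qed.

Lemma stab j k : (j <= k)%N -> (j <= N)%N -> cong j (TP j) (TP k).
Proof.
elim: j k => [|j IH] k jk jN; first exact: cong_0.
case: k jk => [|k] // jk.
have [C' eC] := Cp_form.
have h := IH k jk (ltnW jN).
have hc := contraction (N := N) (C' := C') (C := Cp) (eq_ind _ _ (cong_refl N Cp) _ eC) h (TP0 j) (TP0 k) jN (leqnn _).
rewrite (cong_le jN (TP_step j)) (cong_le jN (TP_step k)) hc; reflexivity.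
Qed.

Lemma gP_TP : cong N gP (TP N).
Proof.
apply: coef_cong => n lt; rewrite /gP coef_tr // frevE.
rewrite -(cong_coef (stab (j := n.+1) (k := N) lt lt) (ltnSn n)) /TP coef_tr //.
Qed.

Lemma gP_fix : cong N gP ('X - (Cp \Po gP)).
Proof.
transitivity (TP N.+1); first by rewrite gP_TP; apply: stab.
rewrite TP_step gP_TP; reflexivity.
Qed.

Lemma gP0 : gP`_0 = 0.
Proof. by rewrite /gP; apply: tr0; rewrite frevE It0. Qed.

End Stab.



Lemma comp_1 (A : comNzRingType) (p : {poly A}) : 1 \Po p = 1.
Proof. by rewrite -polyC1 comp_polyC. Qed.

Section Alg.
Variables (R : comNzRingType) (r s : R) (N : nat).
Local Notation PP := {poly {poly R}}.
Local Notation Y := (('X : {poly R})%:P : PP).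
Local Notation rr := ((r%:P)%:P : PP).
Local Notation ss := ((s%:P)%:P : PP).
Local Notation Qp := (1 + rr * 'X + ss * 'X^2 : PP).
Local Notation Ep := (1 + Y * 'X : PP).
Local Notation aa := ((r%:P + 2%:R * 'X)%:P : PP).
Local Notation bb := ((s%:P + r%:P * 'X + 'X^2)%:P : PP).
Local Notation Dp := (1 + aa * 'X + bb * 'X^2 : PP).

Definition Up := tr N (useries r s).
Definition iQ := tr N (finv1 (Qf r s)).
Definition iD := tr N (finv1 (Dser r s)).
Definition iE := tr N (finv1 (fpoly [:: 1; 'X : {poly R}])).
Definition Gp := tr N (Gser r s).
Definition Fp := tr N (Fser r s).
Definition tt := 'X * iE.

Lemma Qinv : cong N (Qp * iQ) 1.
Proof.
apply: cong_trans (tr_inv N (q := Qf r s) erefl).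
rewrite -/iQ /Qf tr_poly Poly3 polyC1; reflexivity.
Qed.

Lemma Dinv : cong N (Dp * iD) 1.
Proof.
apply: cong_trans (tr_inv N (q := Dser r s) erefl).
rewrite -/iD /Dser tr_poly Poly3 polyC1; reflexivity.
Qed.

Lemma Einv : cong N (Ep * iE) 1.
Proof.
apply: cong_trans (tr_inv N (q := fpoly [:: 1; 'X : {poly R}]) erefl).
rewrite -/iE tr_poly Poly2 polyC1; reflexivity.
Qed.

Lemma UpE : cong N Up (('X - Y * 'X^2) * iQ).
Proof.
rewrite /Up /useries tr_mul tr_poly Poly3 -/(Qf r s) -/iQ.
apply: cong_eq; rewrite polyC0 polyC1 polyCN; ring.
Qed.

Lemma GpE : cong N Gp (Ep * iD).
Proof. rewrite /Gp /Gser tr_mul tr_poly Poly2 -/iD polyC1; reflexivity. Qed.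

Lemma FpE : cong N Fp ('X * iD).
Proof. rewrite /Fp /Fser tr_mul tr_poly Poly2 -/iD polyC0 polyC1; apply: cong_eq; ring. Qed.

Lemma Fp0 : Fp`_0 = 0.
Proof. by apply: tr0; rewrite /Fser /fmul big_ord1 /fpoly /= mul0r. Qed.

Lemma tt0 : tt`_0 = 0.
Proof. by rewrite /tt coefXM. Qed.

Lemma Up_comp (z : PP) : z`_0 = 0 -> cong N (Up \Po z) ((z - Y * z ^+ 2) * (iQ \Po z)).
Proof.
move=> z0; rewrite (cong_comp_l z0 UpE) comp_polyM comp_polyB comp_polyX comp_polyM comp_polyC comp_Xn.
reflexivity.
Qed.

Lemma Q_comp (z : PP) : z`_0 = 0 -> cong N ((1 + rr * z + ss * z ^+ 2) * (iQ \Po z)) 1.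
Proof.
move=> z0; have := cong_comp_l z0 Qinv.
rewrite comp_polyM !comp_polyD !comp_polyM !comp_polyC comp_polyX polyC1 => H.
apply: cong_trans _ H; apply: cong_eq; ring.
Qed.

Lemma key : cong N (Up \Po tt) Fp.
Proof.
have tE : cong N (tt * Ep) 'X.
  transitivity ('X * (Ep * iE)); first by apply: cong_eq; rewrite /tt; ring.
  rewrite Einv mulr1; reflexivity.
have A1 : cong N ((tt - Y * tt ^+ 2) * Ep ^+ 2) 'X.
  transitivity ((tt * Ep) * (Ep - Y * (tt * Ep))); first by apply: cong_eq; ring.
  rewrite tE; apply: cong_eq; ring.
have B1 : cong N Dp ((1 + rr * tt + ss * tt ^+ 2) * Ep ^+ 2).
  transitivity (Ep ^+ 2 + rr * (tt * Ep) * Ep + ss * (tt * Ep) ^+ 2); last by apply: cong_eq; ring.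
  rewrite tE; apply: cong_eq; ring.
transitivity ((Up \Po tt) * (Dp * iD)); first by rewrite Dinv mulr1; reflexivity.
rewrite B1 (Up_comp tt0).
transitivity (((tt - Y * tt ^+ 2) * Ep ^+ 2) * ((1 + rr * tt + ss * tt ^+ 2) * (iQ \Po tt)) * iD).
  by apply: cong_eq; ring.
rewrite A1 (Q_comp tt0) FpE; apply: cong_eq; ring.
Qed.

Lemma CpE : cong N (Cp r s N) (Up - 'X).
Proof. rewrite /Cp /cc tr_sub tr_X; reflexivity. Qed.

Lemma Cp_cong : exists C', cong N (Cp r s N) ('X^2 * C').
Proof. have [C' e] := Cp_form r s N; exists C'; rewrite e; reflexivity. Qed.

Lemma gF : cong N (gP r s N \Po Fp) tt.
Proof.
have [C' eC] := Cp_cong.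
apply: (fixpt_unique (P := Fp) eC).
- by rewrite comp_coef0 ?Fp0 // gP0.
- exact: tt0.
- transitivity (('X - (Cp r s N \Po gP r s N)) \Po Fp); first exact: cong_comp_l Fp0 (gP_fix r s N).
  rewrite comp_polyB comp_polyX -comp_polyA; reflexivity.
- rewrite (cong_comp_l tt0 CpE) comp_polyB comp_polyX key; apply: cong_eq; ring.
Qed.

End Alg.



Lemma comp_sumZ (A : comNzRingType) m (G : nat -> A) (q : {poly A}) :
   (\sum_(i < m) G i *: 'X^i) \Po q = \sum_(i < m) G i *: q ^+ i.
Proof.
elim: m => [|m IH]; first by rewrite !big_ord0 comp_poly0.
by rewrite !big_ord_recr /= comp_polyD comp_polyZ comp_Xn IH.
Qed.

Section Final.
Variables (R : comNzRingType) (r s : R) (n : nat).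
Local Notation N := n.+2.
Local Notation M := n.+1.
Local Notation PP := {poly {poly R}}.
Local Notation Y := (('X : {poly R})%:P : PP).
Local Notation rr := ((r%:P)%:P : PP).
Local Notation ss := ((s%:P)%:P : PP).
Local Notation Ep := (1 + Y * 'X : PP).
Local Notation aa := ((r%:P + 2%:R * 'X)%:P : PP).
Local Notation a0 := ((r%:P + 'X)%:P : PP).
Local Notation bb := ((s%:P + r%:P * 'X + 'X^2)%:P : PP).
Local Notation Dp := (1 + aa * 'X + bb * 'X^2 : PP).

Definition BP : PP := \poly_(k < M) Bt r s k.

Lemma gP_BP : gP r s N = 'X * BP.
Proof.
apply/polyP => i; rewrite coefXM /gP /BP coef_poly.
case: i => [|i] /=; first by rewrite frevE It0.
by rewrite coef_poly BtE.
Qed.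

Lemma part1_cong : cong M (Gp r s N * (BP \Po Fp r s N)) 1.
Proof.
have h1 : cong N (Fp r s N * (BP \Po Fp r s N)) (tt R N).
  have := gF r s N; rewrite gP_BP comp_polyM comp_polyX; exact.
apply: cong_shift; rewrite mulr1.
have DF : cong N (Dp * Fp r s N) 'X.
  rewrite FpE; transitivity ('X * (Dp * iD r s N)); first by apply: cong_eq; ring.
  rewrite Dinv mulr1; reflexivity.
transitivity ((Dp * Fp r s N) * Gp r s N * (BP \Po Fp r s N)); first by rewrite DF; apply: cong_eq; ring.
transitivity (Dp * Gp r s N * (Fp r s N * (BP \Po Fp r s N))); first by apply: cong_eq; ring.
rewrite h1 GpE.
transitivity ((Dp * iD r s N) * (Ep * iE R N) * 'X); first by apply: cong_eq; rewrite /tt; ring.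
rewrite Dinv Einv; apply: cong_eq; ring.
Qed.

Lemma riordan_coef k : riordan (Gser r s) (Fser r s) n k = (Gp r s N * Fp r s N ^+ k)`_n.
Proof.
rewrite /riordan -(coef_tr (N := N)) //.
rewrite (cong_coef (tr_mul N (Gser r s) (fpow (Fser r s) k))) //.
exact: (cong_coef (cong_mul (cong_refl N _) (tr_pow N (Fser r s) k))).
Qed.

Lemma part1 : \sum_(k < n.+1) riordan (Gser r s) (Fser r s) n k * Bt r s k = (n == 0)%:R.
Proof.
rewrite -(coef1 _ n) -(cong_coef part1_cong (ltnSn n)).
rewrite /BP poly_def comp_sumZ mulr_sumr coef_sum; apply: eq_bigr => k _.
by rewrite -scalerAr coefZ mulrC riordan_coef.
Qed.


Lemma U1 : cong N (Up r s N \Po gP r s N) 'X.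
Proof.
have h := gP_fix r s N.
have h2 : cong N (Cp r s N \Po gP r s N) ((Up r s N - 'X) \Po gP r s N).
  exact: cong_comp_l (gP0 r s N) (CpE r s N).
rewrite comp_polyB comp_polyX in h2.
rewrite h2 in h.
transitivity ('X - ('X - ((Up r s N \Po gP r s N) - gP r s N)) + gP r s N).
  by apply: cong_eq; ring.
rewrite -h; apply: cong_eq; ring.
Qed.

Lemma Beq : cong M (BP - Y * 'X * BP ^+ 2) (1 + rr * 'X * BP + ss * 'X^2 * BP ^+ 2).
Proof.
apply: cong_shift.
have g0 := gP0 r s N.
transitivity (gP r s N - Y * gP r s N ^+ 2); first by apply: cong_eq; rewrite gP_BP; ring.
transitivity ((gP r s N - Y * gP r s N ^+ 2) *
   ((1 + rr * gP r s N + ss * gP r s N ^+ 2) * (iQ r s N \Po gP r s N))).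
  by rewrite (Q_comp r s N g0) mulr1; reflexivity.
transitivity (((gP r s N - Y * gP r s N ^+ 2) * (iQ r s N \Po gP r s N)) *
   (1 + rr * gP r s N + ss * gP r s N ^+ 2)); first by apply: cong_eq; ring.
rewrite -(Up_comp r s N g0) U1 gP_BP; apply: cong_eq; ring.
Qed.

Definition iE2 : PP := \sum_(k < M) ('X * (Y * BP)) ^+ k.
Local Notation E2 := (1 - 'X * (Y * BP) : PP).
Definition CC : PP := BP * iE2.

Lemma E2inv : cong M (E2 * iE2) 1.
Proof. exact: geom_inv. Qed.

Lemma CE : cong M BP (CC * E2).
Proof.
transitivity (BP * (E2 * iE2)); first by rewrite E2inv mulr1; reflexivity.
apply: cong_eq; rewrite /CC; ring.
Qed.

Lemma C1 : cong M (CC * (1 - aa * 'X - bb * 'X^2 * CC)) 1.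
Proof.
transitivity (CC * (1 - aa * 'X - bb * 'X^2 * CC) * (E2 * iE2) ^+ 2).
  by rewrite E2inv; apply: cong_eq; ring.
transitivity (((CC * E2) * (E2 - aa * 'X * E2 - bb * 'X^2 * (CC * E2))) * iE2 ^+ 2).
  by apply: cong_eq; ring.
rewrite -CE.
transitivity ((E2 ^+ 2 + (BP - Y * 'X * BP ^+ 2) - (1 + rr * 'X * BP + ss * 'X^2 * BP ^+ 2)) * iE2 ^+ 2).
  by apply: cong_eq; ring.
rewrite Beq.
transitivity ((E2 * iE2) ^+ 2); first by apply: cong_eq; ring.
rewrite E2inv; apply: cong_eq; ring.
Qed.

Lemma B1 : cong M (BP * (1 - a0 * 'X - bb * 'X^2 * CC)) 1.
Proof.
transitivity (BP * (1 - aa * 'X - bb * 'X^2 * CC) + Y * 'X * BP); first by apply: cong_eq; ring.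
transitivity ((CC * E2) * (1 - aa * 'X - bb * 'X^2 * CC) + Y * 'X * BP).
  apply: cong_add; last reflexivity.
  apply: cong_mul; [exact: CE | reflexivity].
transitivity (E2 * (CC * (1 - aa * 'X - bb * 'X^2 * CC)) + Y * 'X * BP); first by apply: cong_eq; ring.
rewrite C1; apply: cong_eq; ring.
Qed.

Local Notation aR := (r%:P + 2%:R * 'X : {poly R}).
Local Notation bR := (s%:P + r%:P * 'X + 'X^2 : {poly R}).
Definition K d := jconv (fun _ => aR) (fun _ => bR) d 0.

Lemma jconst (a b : {poly R}) d j j' :
  jconv (fun _ => a) (fun _ => b) d j = jconv (fun _ => a) (fun _ => b) d j'.
Proof. by elim: d j j' => [|d IH] j j' //=; rewrite (IH j.+1 j'.+1). Qed.

Lemma jshift d j : jconv (alphaB r) (betaB r s) d j.+1 = K d.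
Proof.
elim: d j => [|d IH] j; first by rewrite /K /= /alphaB.
rewrite /K /= IH /K (jconst _ _ d 1 0) /alphaB /betaB //.
Qed.

Lemma jinv (aF bF : {poly R}) (Kf : fps {poly R}) :
  cong M (tr M (finv1 (fsub (fpoly [:: 1; - aF]) (fmul (fpoly [:: 0; 0; bF]) Kf))) *
          (1 - aF%:P * 'X - bF%:P * 'X^2 * tr M Kf)) 1.
Proof.
have q0 : (fsub (fpoly [:: 1; - aF]) (fmul (fpoly [:: 0; 0; bF]) Kf)) 0%N = 1.
  by rewrite /fsub /fmul big_ord1 /fpoly /= mul0r subr0.
apply: cong_trans _ (tr_inv M q0); rewrite mulrC.
rewrite tr_sub tr_mul !tr_poly Poly2 Poly3; apply: cong_eq.
rewrite polyC0 polyC1 polyCN; ring.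
Qed.

Lemma jinv0 (aF : {poly R}) (c : PP) :
  cong M (tr M (finv1 (fpoly [:: 1; - aF])) * (1 - aF%:P * 'X - c * 'X^2 * 0)) 1.
Proof.
rewrite mulr0 subr0.
apply: cong_trans _ (tr_inv M (q := fpoly [:: 1; - aF]) erefl); rewrite mulrC.
rewrite tr_poly Poly2; apply: cong_eq; rewrite polyC1 polyCN; ring.
Qed.

Lemma Q_close m (a c p q : PP) : cong m p q ->
  cong m.+2 (1 - a * 'X - c * 'X^2 * p) (1 - a * 'X - c * 'X^2 * q).
Proof.
move=> [k e]; exists (- c * k).
have -> : 1 - a * 'X - c * 'X^2 * p - (1 - a * 'X - c * 'X^2 * q) = - c * 'X^2 * (p - q) by ring.
rewrite e -(addn2 m) exprD; ring.
Qed.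

Lemma K_conv d : cong (minn d.+1 M) (tr M (K d)) CC.
Proof.
elim: d => [|d IH].
  apply: (inv_unique (m := 2) (jinv0 aR bb) C1); last by lia.
  - exact: Q_close (cong_0 _ _).
  - by rewrite minnC; apply: geq_minl.
have eK : K d.+1 = finv1 (fsub (fpoly [:: 1; - aR]) (fmul (fpoly [:: 0; 0; bR]) (K d))).
  by rewrite /K /= (jconst _ _ d 1 0).
rewrite eK; apply: (inv_unique (jinv aR bR (K d)) C1 (Q_close _ _ IH)); lia.
Qed.

Lemma J_conv d : cong (minn d.+1 M) (tr M (jconv (alphaB r) (betaB r s) d.+1 0)) BP.
Proof.
have eJ : jconv (alphaB r) (betaB r s) d.+1 0 =
   finv1 (fsub (fpoly [:: 1; - (r%:P + 'X)]) (fmul (fpoly [:: 0; 0; bR]) (K d))).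
  by rewrite /= jshift.
rewrite eJ; apply: (inv_unique (jinv _ bR (K d)) B1 (Q_close _ _ (K_conv d))); lia.
Qed.

Lemma part2 : exists M0, forall m, (M0 <= m)%N -> jconv (alphaB r) (betaB r s) m 0 n = Bt r s n.
Proof.
exists n.+1 => -[|d] // le.
have := cong_coef (J_conv d) (n := n); rewrite (minn_idPr le) => /(_ (ltnSn n)).
by rewrite coef_tr // /BP coef_poly ltnSn.
Qed.

End Final.


Theorem mainTheorem15 (R : comNzRingType) (r s : R) :
  first_col_of_inverse (riordan (Gser r s) (Fser r s)) (Bt r s) /\
  fps_limit (fun m => jconv (alphaB r) (betaB r s) m 0) (Bt r s).
Proof.
split; move=> n; [exact: (part1 r s n) | exact: (part2 r s n)].
Qed.
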